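(* Let $A$ be a C*-algebra and $D$ a modular maximal right ideal of $A$. Regard $A$ as a right Hilbert $A$-module with $\langle a,b\rangle=a^*b$ and $D\subseteq A$ as a Hilbert $A$-submodule. Then every bounded $A$-linear map $r:D^{\perp\perp}\to A$ which vanishes on $D$ is the zero map, where $D^{\perp\perp}$ is the biorthogonal complement of $D$ in $A$.
   Context: A right ideal $D$ of $A$ is modular if there exists $u\in A$ with $a-ua\in D$ for all $a\in A$; it is maximal if it is a proper right ideal not contained in any larger proper right ideal. For $S\subseteq A$, $S^\perp=\{b\in A: s^*b=0\ \forall s\in S\}$ and $S^{\perp\perp}=(S^\perp)^\perp$. *)

(* Defs.v *)
From HB Require Import structures.
From mathcomp Require Import all_boot all_order all_algebra.
From mathcomp Require Import complex.
From mathcomp Require Import all_classical all_reals all_analysis.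
Set Implicit Arguments. Unset Strict Implicit. Unset Printing Implicit Defensive.
Import Order.TTheory GRing.Theory Num.Theory ComplexField.
Import numFieldNormedType.Exports.
Local Open Scope classical_set_scope.
Local Open Scope ring_scope.

Definition is_cstar_algebra (R : realType) (A : completeNormedModType R[i])
    (mul : A -> A -> A) (star : A -> A) : Prop :=
  (forall a b c, mul (mul a b) c = mul a (mul b c))
  /\ (forall a b c, mul (a + b) c = mul a c + mul b c)
  /\ (forall a b c, mul a (b + c) = mul a b + mul a c)
  /\ (forall (k : R[i]) a b, mul (k *: a) b = k *: mul a b)
  /\ (forall (k : R[i]) a b, mul a (k *: b) = k *: mul a b)
  /\ (forall a b, star (a + b) = star a + star b)
  /\ (forall (k : R[i]) a, star (k *: a) = (k^*)%C *: star a)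
  /\ (forall a, star (star a) = a)
  /\ (forall a b, star (mul a b) = mul (star b) (star a))
  /\ (forall a b, `|mul a b| <= `|a| * `|b|)
  /\ (forall a, `|mul (star a) a| = `|a| ^+ 2).

Definition right_ideal (R : realType) (A : completeNormedModType R[i])
    (mul : A -> A -> A) (D : set A) : Prop :=
  [/\ D 0,
      (forall x y, D x -> D y -> D (x + y)),
      (forall (k : R[i]) x, D x -> D (k *: x)) &
      (forall x a, D x -> D (mul x a))].

Definition modular_right_ideal (R : realType) (A : completeNormedModType R[i])
    (mul : A -> A -> A) (D : set A) : Prop :=
  right_ideal mul D /\ exists u : A, forall a : A, D (a - mul u a).

Definition maximal_right_ideal (R : realType) (A : completeNormedModType R[i])
    (mul : A -> A -> A) (D : set A) : Prop :=
  [/\ right_ideal mul D, D != setT &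
      forall E : set A, right_ideal mul E -> E != setT -> D `<=` E -> E = D].

(* Orthogonal complement in A regarded as a right Hilbert A-module with
   <a, b> = a^* b. *)
Definition perp (R : realType) (A : completeNormedModType R[i])
    (mul : A -> A -> A) (star : A -> A) (S : set A) : set A :=
  [set b | forall s, S s -> mul (star s) b = 0].

(* A bounded A-linear map defined on the submodule M, represented by a
   function r : A -> A whose values outside M are irrelevant. *)
Definition bounded_Alinear_on (R : realType) (A : completeNormedModType R[i])
    (mul : A -> A -> A) (M : set A) (r : A -> A) : Prop :=
  [/\ (forall x y, M x -> M y -> r (x + y) = r x + r y),
      (forall (k : R[i]) x, M x -> r (k *: x) = k *: r x),
      (forall x a, M x -> r (mul x a) = mul (r x) a) &
      exists C : R[i], forall x, M x -> `|r x| <= C * `|x|].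

(* Main.v *)
Require Import Defs.
From HB Require Import structures.
From mathcomp Require Import all_boot all_order all_algebra.
From mathcomp Require Import complex.
From mathcomp Require Import all_classical all_reals all_analysis.
Import Order.TTheory GRing.Theory Num.Theory ComplexField.
Import numFieldNormedType.Exports.
Local Open Scope classical_set_scope.
Local Open Scope ring_scope.

Lemma add_self0 (V : zmodType) (z : V) : z = z + z -> z = 0.
Proof. by move=> h; apply: (@addrI _ z); rewrite addr0 -h. Qed.

Theorem theorem5p1 (R : realType) (A : completeNormedModType R[i])
    (mul : A -> A -> A) (star : A -> A) (D : set A) (r : A -> A) :
  is_cstar_algebra mul star ->
  modular_right_ideal mul D ->
  maximal_right_ideal mul D ->
  bounded_Alinear_on mul (perp mul star (perp mul star D)) r ->
  (forall d, D d -> r d = 0) ->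
  forall x, perp mul star (perp mul star D) x -> r x = 0.
Proof.
move=> [mA [mDl [mDr [_ [mZr [sD [_ [sK [sM [_ cst]]]]]]]]]].
move=> [_ [u hu]] [rD _ hmax] [rAdd _ rMul _] r0 x hx.
have s0 : star 0 = 0 by apply: add_self0; rewrite -sD addr0.
have m0l a : mul 0 a = 0 by apply: add_self0; rewrite -mDl addr0.
have m0r a : mul a 0 = 0 by apply: add_self0; rewrite -mDr addr0.
set P := perp mul star (perp mul star D).
have DP : D `<=` P.
  move=> d Dd s Ps; by rewrite -[d]sK -sM Ps // s0.
have rP : right_ideal mul P.
  split.
  - by move=> s _; rewrite m0r.
  - by move=> a b Pa Pb s Ps; rewrite mDr Pa // Pb // addr0.
  - by move=> k a Pa s Ps; rewrite mZr Pa // scaler0.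
  - by move=> a b Pa s Ps; rewrite -mA Pa // m0l.
have [PT|PnT] := pselect (P = setT); last first.
  have PD : P = D by apply: hmax => //; apply/eqP.
  by apply: r0; rewrite -PD.
set c := r u.
have rc a : r a = mul c a.
  have Pa : P a by rewrite PT.
  have Pu : P u by rewrite PT.
  have Pd : P (a - mul u a) by apply: DP.
  have Pua : P (mul u a) by rewrite PT.
  rewrite -[a in LHS](subrK (mul u a)) rAdd // r0 // add0r rMul //.
have cD d : D d -> mul c d = 0 by move=> Dd; rewrite -rc r0.
have Pc : perp mul star D (star c) by move=> d Dd; rewrite -sM cD // s0.
have hc : mul c (star c) = 0.
  have : P (star c) by rewrite PT.
  by move/(_ _ Pc); rewrite sK.
have sc0 : star c = 0.
  have := cst (star c); rewrite sK hc normr0 => /esym /eqP.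
  by rewrite expf_eq0 /= normr_eq0 => /eqP.
by rewrite rc -[c]sK sc0 s0 m0l.
Qed.
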